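(* Let $G$ be a finite solvable, non-nilpotent group of Fitting length $d$. Then there are normal subgroups $K\trianglelefteq G$ and $H\trianglelefteq G$ with $K\le H\neq G$, $\mathrm{FitL}(K)=d-1$ and $\mathcal{U}_{d-1}G\le H$, such that for all $g\in G\setminus H$ we have $\eta_g(K)=K$, and for all $h\in H$ we have $\mathrm{FitL}(\eta_h(K))<\mathrm{FitL}(K)$.
   Context: Commutators: $[x,y]=x^{-1}y^{-1}xy$, $x^y=y^{-1}xy$; for subsets $X,Y\subseteq G$, $[X,Y]$ is the subgroup generated by all $[x,y]$, $x\in X$, $y\in Y$, and $[X,{}_kY]=[\cdots[[X,Y],Y]\cdots,Y]$ with $k$ copies of $Y$. $g^G=\{g^x:x\in G\}$. Fix $M\in\mathbb{N}$ such that $[X,{}_MY]=[X,{}_iY]$ for all $i\ge M$ and all $X,Y\subseteq G$ with $X^G=X$, $Y^G=Y$ (e.g. $M=\lvert G\rvert$). For $K\trianglelefteq G$ and $g\in G$, $\eta_g(K)=[K,{}_M\,g^G]$. $\mathrm{Fit}(G)$ is the largest nilpotent normal subgroup; the upper Fitting series is $\mathcal{U}_0G=1$, $\mathcal{U}_{i+1}G/\mathcal{U}_iG=\mathrm{Fit}(G/\mathcal{U}_iG)$; the Fitting length $\mathrm{FitL}$ of a solvable group is the least $d$ with $\mathcal{U}_dG=G$. *)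

(* Defs.v *)
From mathcomp Require Import all_boot all_fingroup all_solvable.
Set Implicit Arguments.
Unset Strict Implicit.
Unset Printing Implicit Defensive.
Local Open Scope group_scope.

Section Defs.
Variable gT : finGroupType.
Implicit Types (X Y G : {set gT}).

Fixpoint itercomm X Y (k : nat) : {set gT} :=
  if k is k'.+1 then [~: itercomm X Y k', Y] else X.

Definition Gnormal_set G X := (X \subset G) && (G \subset 'N(X)).

Definition eta (M : nat) G (g : gT) (K : {set gT}) := itercomm K (g ^: G) M.

(* Upper Fitting series: U_0 = 1, U_{i+1}/U_i = F(G/U_i)
   (U_{i+1} is the full preimage of F(G/U_i) under the projection mod U_i). *)
Fixpoint ufit (n : nat) G : {set gT} :=
  if n is n'.+1 then coset (ufit n' G) @*^-1 'F(G / ufit n' G) else 1.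

(* Fitting length: the least d with U_d G = G (searched in 0..|G|, which
   suffices for solvable groups). *)
Definition FitL G : nat := find (fun d => ufit d G == G) (iota 0 #|G|.+1).

End Defs.

(* Main.v *)
Require Import Defs.
From mathcomp Require Import all_boot all_fingroup all_solvable.
Set Implicit Arguments.
Unset Strict Implicit.
Unset Printing Implicit Defensive.
Local Open Scope group_scope.

Section Aux.
Variable gT : finGroupType.
Implicit Types (G X N : {group gT}).

Lemma ufit_group k G : group_set (ufit k G).
Proof. by case: k => [|k] /=; [exact: group_set_one | exact: groupP]. Qed.

Canonical ufitG k G : {group gT} := Group (ufit_group k G).

Lemma ufitSE k G : ufit k.+1 G = coset (ufitG k G) @*^-1 'F(G / ufitG k G).
Proof. by []. Qed.

Lemma ufit_normal k G : ufit k G <| G.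
Proof.
elim: k => [|k IH]; first exact: normal1.
have {IH}IH : ufitG k G <| G := IH.
by rewrite ufitSE -{2}(quotientGK IH) cosetpre_normal Fitting_normal.
Qed.

Lemma ufit_sub k G : ufit k G \subset G.
Proof. exact: normal_sub (ufit_normal k G). Qed.

Lemma ufitS k G : ufit k G \subset ufit k.+1 G.
Proof.
rewrite ufitSE; have := ker_sub_pre (coset_morphism (ufitG k G)) 'F(G / ufitG k G).
by rewrite ker_coset.
Qed.

Lemma ufit_char_nil N k G : N <| G -> ufit k G \subset N ->
  (N \subset ufit k.+1 G) = nilpotent (N / ufitG k G).
Proof.
move=> nNG sUN; have nUG : ufitG k G <| G := ufit_normal k G.
have nUN : N \subset 'N(ufitG k G).
  exact: subset_trans (normal_sub nNG) (normal_norm nUG).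
apply/idP/idP => [sNU | nilN].
  apply: (nilpotentS _ (Fitting_nil (G / ufitG k G))).
  by rewrite sub_quotient_pre.
rewrite ufitSE -sub_quotient_pre //; apply: Fitting_max => //.
exact: quotient_normal.
Qed.

Lemma ufit_charG k G : ufit k G \char G.
Proof.
elim: k => [|k IH]; first exact: char1.
have {IH}IH : ufitG k G \char G := IH.
change (ufitG k.+1 G \char G).
apply: (char_from_quotient _ IH).
  apply: normalS (ufitS k G) (ufit_sub _ _) (ufit_normal k G).
by rewrite (_ : gval (ufitG k.+1 G) = ufit k.+1 G) // ufitSE cosetpreK Fitting_char.
Qed.

Lemma ufit_normalsub k G X : X <| G -> ufit k X = X :&: ufit k G.
Proof.
move=> nXG; elim: k => [|k IH].
  by rewrite /= setIC (setIidPl (sub1G X)).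
apply/eqP; rewrite eqEsubset; apply/andP; split.
  rewrite subsetI ufit_sub andTb.
  have nNG : ufitG k.+1 X <| G := char_normal_trans (ufit_charG k.+1 X) nXG.
  have nUG : ufitG k G <| G := ufit_normal k G.
  have nUN : ufitG k.+1 X \subset 'N(ufitG k G).
    exact: subset_trans (normal_sub nNG) (normal_norm nUG).
  have nNUG : (ufitG k.+1 X <*> ufitG k G)%G <| G by exact: normalY.
  apply: subset_trans (joing_subl (ufitG k.+1 X) (ufitG k G)) _.
  rewrite (ufit_char_nil nNUG (joing_subr _ _)).
  rewrite quotientYidr // -(isog_nil (second_isog nUN)).
  have -> : ufitG k G :&: ufitG k.+1 X = ufitG k X.
    apply/eqP; rewrite eqEsubset; apply/andP; split.
      rewrite [gval (ufitG k X)]IH subsetI subsetIl andbT.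
      exact: subset_trans (subsetIr _ _) (ufit_sub _ _).
    rewrite subsetI ufitS andbT [gval (ufitG k X)]IH; exact: subsetIr.
  by move: (Fitting_nil (X / ufitG k X)); rewrite -(cosetpreK (H := ufitG k X) (Fitting _)).
have nWG : ufitG k.+1 G <| G := ufit_normal _ _.
have nUG : ufitG k G <| G := ufit_normal _ _.
have nZX : (X :&: ufitG k.+1 G)%G <| X.
  apply: norm_normalI; exact: subset_trans (normal_sub nXG) (normal_norm nWG).
have sUZ : ufit k X \subset X :&: ufitG k.+1 G.
  by rewrite IH; apply: setIS; exact: ufitS.
have E := ufit_char_nil nZX sUZ.
rewrite E.
have nUZ : (X :&: ufitG k.+1 G)%G \subset 'N(ufitG k G).
  exact: subset_trans (subsetIl _ _) (subset_trans (normal_sub nXG) (normal_norm nUG)).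
rewrite (_ : gval (ufitG k X) = ufitG k G :&: (X :&: ufitG k.+1 G)%G); last first.
  by rewrite [LHS]IH setIA (setIC _ X) -setIA (setIidPl (ufitS k G)).
rewrite (isog_nil (second_isog nUZ)).
apply: (nilpotentS _ (Fitting_nil (G / ufitG k G))).
rewrite sub_quotient_pre //; exact: subsetIr.
Qed.

Lemma ufit_stable k G : ufit k G = G -> ufit k.+1 G = G.
Proof.
move=> E; apply/eqP; rewrite eqEsubset ufit_sub andTb.
rewrite (ufit_char_nil (normal_refl G) (ufit_sub k G)).
by rewrite (_ : gval (ufitG k G) = G) // trivg_quotient nilpotent1.
Qed.

Lemma ufit_ge j k G : j <= k -> ufit j G = G -> ufit k G = G.
Proof.
move=> le E; elim: k le => [|k IH]; first by rewrite leqn0 => /eqP <-.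
rewrite leq_eqVlt => /orP [/eqP <- // | lt]; apply: ufit_stable; exact: IH.
Qed.

Lemma ufit_mono j k G : j <= k -> ufit j G \subset ufit k G.
Proof.
elim: k => [|k IH]; first by rewrite leqn0 => /eqP ->.
rewrite leq_eqVlt => /orP [/eqP -> // | lt].
exact: subset_trans (IH lt) (ufitS k G).
Qed.

Lemma ufit_card k G : solvable G -> ufit k G = G \/ k < #|ufit k G|.
Proof.
move=> solG; elim: k => [|k IH]; first by right; exact: cardG_gt0 (ufitG 0 G).
case: IH => [E | lt]; first by left; exact: ufit_stable.
case: (ufit k.+1 G =P G) => [E|ne]; first by left.
right; have sUU := ufitS k G.
suff: ufit k G \proper ufit k.+1 G by move/proper_card; exact: leq_ltn_trans lt.
rewrite properEneq sUU andbT; apply/eqP => E'; apply: ne.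
have nUG : ufitG k G <| G := ufit_normal k G.
have F1 : 'F(G / ufitG k G) = 1.
  rewrite -(cosetpreK (H := ufitG k G) (Fitting _)) -ufitSE -E'.
  exact: trivg_quotient.
have : G / ufitG k G :==: 1.
  by rewrite -trivg_Fitting ?F1 // quotient_sol.
move/eqP/trivgP; rewrite quotient_sub1 ?normal_norm // => sGU.
apply/eqP; rewrite eqEsubset ufit_sub andTb; exact: subset_trans sGU sUU.
Qed.

Lemma FitL_spec G : solvable G ->
  ufit (FitL G) G = G /\ (forall i, i < FitL G -> ufit i G != G).
Proof.
move=> solG.
have hasF : has (fun d => ufit d G == G) (iota 0 #|G|.+1).
  apply/hasP; exists #|G|; first by rewrite mem_iota ltnSn.
  case: (ufit_card #|G| solG) => [-> // | lt].
  by have := subset_leq_card (ufit_sub #|G| G); rewrite leqNgt lt.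
have lt := hasF; rewrite has_find size_iota in lt.
split.
  by have := nth_find 0 hasF; rewrite nth_iota // add0n => /eqP.
move=> i lti; have := before_find 0 lti.
by rewrite nth_iota ?add0n ?(ltn_trans lti) // => ->.
Qed.

Lemma FitL_le G k : solvable G -> (FitL G <= k) = (ufit k G == G).
Proof.
move=> solG; have [S1 S2] := FitL_spec solG.
apply/idP/eqP => [le | E]; first exact: ufit_ge le S1.
by rewrite leqNgt; apply/negP => /S2; rewrite E eqxx.
Qed.


Lemma itercommE (A B : {set gT}) k : itercomm A B k = iter k (fun C => [~: C, B]) A.
Proof. by elim: k => //= k ->. Qed.

Lemma itercomm_lcn G k : itercomm G G k = 'L_k.+1(G).
Proof. by rewrite itercommE lcnE. Qed.

Lemma itercomm_sub_lcn (A : {set gT}) G k : A \subset G -> itercomm A G k \subset 'L_k.+1(G).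
Proof.
move=> sAG; elim: k => [|k IH] //=.
by rewrite lcnSn; apply: commSg.
Qed.

Lemma nil_quo_lcn (A U : {group gT}) : A \subset 'N(U) -> nilpotent (A / U) ->
  exists n, 'L_n.+1(A) \subset U.
Proof.
move=> nUA /lcnP [n E]; exists n.
rewrite -quotient_sub1; last exact: subset_trans (lcn_sub _ _) nUA.
by rewrite /quotient morphim_lcn // E.
Qed.

Lemma lcn_quo_nil (A U : {group gT}) n : A \subset 'N(U) -> 'L_n.+1(A) \subset U ->
  nilpotent (A / U).
Proof.
move=> nUA sLU; apply/lcnP; exists n.
rewrite /quotient -morphim_lcn //; apply/trivgP; rewrite -/(quotient _ _) quotient_sub1 //.
exact: subset_trans (lcn_sub _ _) nUA.
Qed.


Lemma itc_group (K : {group gT}) (C : {set gT}) k : group_set (itercomm K C k).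
Proof. by case: k => [|k] /=; exact: groupP. Qed.

Lemma itc_normal G (K : {group gT}) (C : {set gT}) k :
  K <| G -> C \subset G -> G \subset 'N(C) -> itercomm K C k <| G.
Proof.
move=> nKG sCG nCG; elim: k => [|k IH] //=.
apply/andP; split; first exact: comm_subG (normal_sub IH) sCG.
exact: normsR (normal_norm IH) nCG.
Qed.

Lemma itc_decr G (K : {group gT}) (C : {set gT}) k :
  K <| G -> C \subset G -> G \subset 'N(C) ->
  itercomm K C k.+1 \subset itercomm K C k.
Proof.
move=> nKG sCG nCG; have nI := itc_normal k nKG sCG nCG.
apply: subset_trans (commgS _ sCG) _.
have := commg_subl (Group (itc_group K C k)) G.
by rewrite (normal_norm nI) => ->.
Qed.

Lemma itc_mono G (K : {group gT}) (C : {set gT}) j k :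
  K <| G -> C \subset G -> G \subset 'N(C) -> j <= k ->
  itercomm K C k \subset itercomm K C j.
Proof.
move=> nKG sCG nCG; elim: k => [|k IH]; first by rewrite leqn0 => /eqP ->.
rewrite leq_eqVlt => /orP [/eqP -> // | lt].
exact: subset_trans (itc_decr k nKG sCG nCG) (IH lt).
Qed.

Lemma itc_prop G (K L : {group gT}) (C : {set gT}) :
  K <| G -> C \subset G -> G \subset 'N(C) -> L <| G ->
  K \subset [~: K, C] * L -> forall i, K \subset itercomm K C i * L.
Proof.
move=> nKG sCG nCG nLG sK; elim=> [|i IH]; first by apply: mulg_subl; exact: group1.
apply: subset_trans sK _.
set R := Group (itc_group K C i.+1).
have nRG : R <| G := itc_normal i.+1 nKG sCG nCG.
have nRL : L \subset 'N(R) := subset_trans (normal_sub nLG) (normal_norm nRG).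
rewrite (_ : itercomm K C i.+1 * L = R <*> L); last by rewrite norm_joinEr.
rewrite mul_subG ?joing_subr //.
rewrite gen_subG; apply/subsetP => _ /imset2P [x c Kx Cc ->].
have /mulsgP [y l Iy Ll ->] := subsetP IH x Kx.
rewrite commMgJ; apply: groupM.
  apply: groupJ; last exact: (subsetP (joing_subr _ _)).
  apply: (subsetP (joing_subl _ _)); exact: mem_commg.
apply: (subsetP (joing_subr _ _)).
have Gc : c \in G := subsetP sCG c Cc.
by rewrite commgEl groupM ?groupV // memJ_norm // (subsetP (normal_norm nLG)).
Qed.

End Aux.

Unset Implicit Arguments.
Set Strict Implicit.

Theorem lemma5p1 (gT : finGroupType) (G : {group gT}) (M : nat)
  (hM : forall X Y : {set gT}, Gnormal_set G X -> Gnormal_set G Y ->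
        forall i, (M <= i)%N -> itercomm X Y i = itercomm X Y M)
  (d : nat) :
  solvable G -> ~~ nilpotent G -> FitL G = d ->
  exists K H : {group gT},
    [/\ K <| G, H <| G, K \subset H & H :!=: G] /\
    [/\ FitL K = d.-1, ufit d.-1 G \subset H,
        (forall g, g \in G :\: H -> eta M G g K = K) &
        (forall h, h \in H -> (FitL (eta M G h K) < FitL K)%N)].
Proof.
move=> solG nnilG FitLd.
have gnG : Gnormal_set G G by rewrite /Gnormal_set subxx normG.
have M1 : 0 < M.
  case: M hM => // hM0; exfalso; move/negP: nnilG; apply.
  have gn1 : Gnormal_set G 1 by rewrite /Gnormal_set sub1G norms1.
  have := hM0 G 1 gnG gn1 1%N isT; rewrite /= commG1 => <-; exact: nilpotent1.
have [S1 S2] := FitL_spec solG.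
have d2 : 1 < d.
  rewrite ltnNge; apply/negP => le1.
  have : ufit 1 G == G by rewrite -(FitL_le 1 solG) FitLd.
  rewrite eqEsubset ufit_sub andTb (ufit_char_nil (normal_refl G) (ufit_sub 0 G)).
  rewrite (_ : gval (ufitG 0 G) = 1) // -(isog_nil (quotient1_isog G)) => nilG.
  by rewrite nilG in nnilG.
case: d FitLd d2 S1 S2 => [|[|e]] // FitLd _ S1 S2.
rewrite FitLd in S1; rewrite /=.
set U := ufitG e G; set V := ufitG e.+1 G.
have nUG : U <| G := ufit_normal e G.
have nVG : V <| G := ufit_normal e.+1 G.
have VneG : ufit e.+1 G != G by rewrite -(FitL_le e.+1 solG) FitLd ltnn.
have nilGV : nilpotent (G / V).
  by rewrite -(ufit_char_nil (normal_refl G) (ufit_sub _ _)) S1.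
have nilVU : nilpotent (V / U).
  by rewrite -(ufit_char_nil nVG (ufitS e G)).
have nnilGU : ~~ nilpotent (G / U).
  apply/negP => h; move: VneG; rewrite eqEsubset ufit_sub andTb.
  by rewrite (ufit_char_nil (normal_refl G) (ufit_sub e G)) h.
pose P := fun X : {group gT} =>
  [&& X <| G, X \subset V, ~~ (X \subset U) & [~: X, G] == X].
have hMG : forall i, M <= i -> 'L_i.+1(G) = 'L_M.+1(G).
  by move=> i le; rewrite -!itercomm_lcn; apply: hM.
have PX0 : P ('L_M.+1(G))%G.
  apply/and4P; split.
  - exact: lcn_normal.
  - have [n sn] := nil_quo_lcn (normal_norm nVG) nilGV.
    change ('L_M.+1(G) \subset V); rewrite -(hMG (M + n)) ?leq_addr //.
    by apply: subset_trans sn; apply: lcn_sub_leq; rewrite ltnS leq_addl.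
  - change (~~ ('L_M.+1(G) \subset U)); apply/negP => h; move/negP: nnilGU; apply.
    exact: lcn_quo_nil (normal_norm nUG) h.
  - change ([~: 'L_M.+1(G), G] == 'L_M.+1(G)); by rewrite -lcnSn (hMG M.+1).
have [K minK _] := mingroup_exists PX0.
case/mingroupP: minK => PK minK'.
case/and4P: PK => nKG sKV nsKU /eqP KGK.
pose Q := fun N : {group gT} => [&& N <| G, N \subset K & N :!=: K].
have QKU : Q (K :&: U)%G.
  apply/and3P; split; [exact: normalI | exact: subsetIl |].
  by apply/negP => /eqP E; move/negP: nsKU; apply; rewrite -E subsetIr.
have [L maxL sKUL] := maxgroup_exists QKU.
case/maxgroupP: maxL => QL maxL'.
case/and3P: QL => nLG sLK LneK.
have KneL : ~~ (K \subset L).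
  by apply/negP => sKL; move/negP: LneK; apply; rewrite eqEsubset sLK.
have chief : forall N : {group gT}, N <| G -> N \subset K -> ~~ (N \subset L) ->
    K \subset N * L.
  move=> N nNG sNK nsNL.
  have nNL : L \subset 'N(N) := subset_trans (normal_sub nLG) (normal_norm nNG).
  case: (eqVneq (N <*> L) (gval K)) => [E | ne].
    by rewrite -E norm_joinEr.
  have QNL : Q (N <*> L)%G.
    by apply/and3P; split; [exact: normalY | rewrite join_subG sNK sLK | exact: ne].
  have E := maxL' _ QNL (joing_subr _ _).
  by move/negP: nsNL; case; rewrite -E joing_subl.
pose H := (coset L @*^-1 'C_(G / L)(K / L))%G.
have nHG : H <| G.
  rewrite /H /= -{2}(quotientGK nLG) cosetpre_normal.
  have := subcent_normal (G / L) (K / L).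
  by rewrite (setIidPl (quotient_norms L (normal_norm nKG))).
have HE : forall h, h \in G -> reflect (forall k, k \in K -> [~ k, h] \in L) (h \in H).
  move=> h Gh; have nLh : h \in 'N(L) := subsetP (normal_norm nLG) h Gh.
  apply: (iffP morphpreP) => [[_ /setIP [_ cent]] k Kk | HK].
    have nLk : k \in 'N(L) := subsetP (normal_norm nLG) k (subsetP (normal_sub nKG) k Kk).
    apply: coset_idr; first by rewrite groupR.
    rewrite morphR //; apply/eqP/commgP; apply: esym.
    exact: (centP cent) (mem_quotient L Kk).
  split=> //; apply/setIP; split; first exact: mem_quotient.
  apply/centP => _ /morphimP [k nLk Kk ->].
  apply: esym; apply/commgP; rewrite -morphR //; apply/eqP; exact: coset_id (HK k Kk).
have HK1 : forall h, h \in H -> [~: K, h ^: G] \subset L.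
  move=> h Hh; rewrite gen_subG; apply/subsetP => _ /imset2P [k y Kk /imsetP [x Gx ->] ->].
  have Hhx : h ^ x \in H by rewrite memJ_norm // (subsetP (normal_norm nHG)).
  exact: (elimT (HE _ (subsetP (normal_sub nHG) _ Hhx)) Hhx).
have HK2 : forall g, g \in G -> [~: K, g ^: G] \subset L -> g \in H.
  move=> g Gg s; apply/HE => // k Kk; apply: (subsetP s); exact: mem_commg (class_refl G g).
have sGNL : G \subset 'N(L) := normal_norm nLG.
have sVH : V \subset H.
  apply/subsetP => v Vv; have Gv := subsetP (normal_sub nVG) v Vv.
  apply: HK2 => //.
  have sCV : v ^: G \subset V by rewrite class_sub_norm ?normal_norm.
  apply: subset_trans (commgS _ sCV) _.
  apply/idPn => ns.
  have sVG := normal_sub nVG; have nVG' := normal_norm nVG.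
  have nNG : [~: K, V]%G <| G := itc_normal 1 nKG sVG nVG'.
  have sNK : [~: K, V]%G \subset K := itc_mono nKG sVG nVG' (isT : 0 <= 1).
  have sK := chief _ nNG sNK ns.
  have prop := itc_prop nKG sVG nVG' nLG sK.
  have [n sn] := nil_quo_lcn (subset_trans sVG (normal_norm nUG)) nilVU.
  have sKUL' : K \subset U * L.
    apply: subset_trans (prop n) _; apply: mulSg.
    exact: subset_trans (itercomm_sub_lcn n sKV) sn.
  move/negP: KneL; apply.
  have cUL : commute U L := normC (subset_trans (normal_sub nUG) sGNL).
  rewrite cUL in sKUL'.
  have : K \subset L * U :&: K by rewrite subsetI sKUL' subxx.
  rewrite -group_modl // => h; apply: subset_trans h _.
  by rewrite mul_subG // setIC.
have FK : FitL K = e.+1.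
  have solK := solvableS (normal_sub nKG) solG.
  apply/eqP; rewrite eqn_leq (FitL_le e.+1 solK) (ufit_normalsub e.+1 nKG).
  rewrite (setIidPl sKV) eqxx andTb ltnNge (FitL_le e solK) (ufit_normalsub e nKG).
  by apply/negP => /eqP E; move/negP: nsKU; apply; rewrite -E subsetIr.
have stab : forall C, C <| G ->
    [~: itercomm K C M, G] == itercomm K C M.
  move=> C nCG; have := hM K C nKG nCG M.+1 (leqnSn M); rewrite /= => E.
  have nY := itc_normal M nKG (normal_sub nCG) (normal_norm nCG).
  rewrite eqEsubset; apply/andP; split.
    have := commg_subl (Group (itc_group K C M)) G.
    by rewrite (normal_norm nY) => ->.
  by rewrite -{1}E; apply: commgS (normal_sub nCG).
exists K, H; split; first split => //.
- exact: subset_trans sKV sVH.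
- apply/negP => /eqP HG; move/negP: KneL; apply.
  rewrite -{1}KGK gen_subG; apply/subsetP => _ /imset2P [k g Kk Gg ->].
  have Hg : g \in H by rewrite HG.
  exact: (elimT (HE g Gg) Hg).
split => //.
- move=> g /setDP [Gg nHg].
  have nCG : g ^: G <| G := class_normal Gg.
  have sCG := normal_sub nCG; have nCG' := normal_norm nCG.
  have ns : ~~ ([~: K, g ^: G] \subset L).
    by apply/negP => s; move/negP: nHg; apply; exact: HK2.
  have nNG : [~: K, g ^: G]%G <| G := itc_normal 1 nKG sCG nCG'.
  have sNK : [~: K, g ^: G]%G \subset K := itc_mono nKG sCG nCG' (isT : 0 <= 1).
  have sK := chief _ nNG sNK ns.
  have prop := itc_prop nKG sCG nCG' nLG sK M.
  set Y := Group (itc_group K (g ^: G) M).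
  have nYG : Y <| G := itc_normal M nKG sCG nCG'.
  have sYK : Y \subset K := itc_mono nKG sCG nCG' (isT : 0 <= M).
  have PY : P Y.
    apply/and4P; split => //.
    - exact: subset_trans sYK sKV.
    - apply/negP => sYU; move/negP: KneL; apply.
      apply: subset_trans prop _; rewrite mul_subG //.
      apply: subset_trans sKUL; rewrite subsetI sYK; exact: sYU.
    - exact: stab.
  exact: minK' Y PY sYK.
- move=> h Hh; rewrite FK ltnS.
  have Gh := subsetP (normal_sub nHG) h Hh.
  have nCG : h ^: G <| G := class_normal Gh.
  have sCG := normal_sub nCG; have nCG' := normal_norm nCG.
  set Y := Group (itc_group K (h ^: G) M).
  have nYG : Y <| G := itc_normal M nKG sCG nCG'.
  have sYK : Y \subset K := itc_mono nKG sCG nCG' (isT : 0 <= M).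
  have solY := solvableS (normal_sub nYG) solG.
  have -> : eta M G h K = Y by [].
  rewrite (FitL_le e solY) (ufit_normalsub e nYG); apply/eqP/setIidPl.
  apply/idPn => nsYU.
  have PY : P Y.
    apply/and4P; split => //.
    - exact: subset_trans sYK sKV.
    - exact: stab.
  have EY := minK' Y PY sYK.
  have sYL : Y \subset L.
    apply: subset_trans (HK1 h Hh).
    exact: itc_mono nKG sCG nCG' M1.
  by move/negP: KneL; apply; rewrite -EY.
Qed.
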